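(* For every BIMS channel with capacity $C$ and every $R\ge0$, the expurgated exponent satisfies $$E_{\rm ex}^{\rm bsc}(R;C)\le E_{\rm ex}(R)\le E_{\rm ex}^{\rm bec}(R;C).$$
   Context: A BIMS (binary-input memoryless symmetric) channel is a memoryless channel with input alphabet $\{x_0,x_1\}$, finite output alphabet $\mathcal Y$ and transition probabilities $P_{Y|X}(y|x)$. It is symmetric in Gallager's sense: the columns of the $2\times|\mathcal Y|$ transition matrix (rows indexed by inputs) can be partitioned into submatrices such that, in each submatrix, every row is a permutation of every other row and every column is a permutation of every other column. The capacity $C$ is $I(X;Y)$ under equiprobable inputs, in bits, and logarithms are base 2. The Bhattacharyya parameter is $Z=\sum_y\sqrt{P_{Y|X}(y|x_0)P_{Y|X}(y|x_1)}$. For $\rho\ge1$ and $Z\in[0,1]$, let $$E_x(\rho;Z)=-\rho\log\frac{1+Z^{1/\rho}}{2},\qquad E_{\rm ex}(R)=\sup_{\rho\ge1}\bigl(E_x(\rho;Z)-\rho R\bigr).$$ Define $$E_{\rm ex}^{\rm bec}(R;C)=\sup_{\rho\ge1}\bigl(E_x(\rho;1-C)-\rho R\bigr),\qquad E_{\rm ex}^{\rm bsc}(R;C)=\sup_{\rho\ge1}\bigl(E_x(\rho;2\sqrt{\varepsilon(1-\varepsilon)})-\rho R\bigr),$$ where $\varepsilon=h^{-1}(1-C)$, $h$ is the binary entropy function and $h^{-1}$ its inverse on $[0,\tfrac12]$. These are the expurgated exponents of the BEC and BSC of capacity $C$. *)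

(* Defs.v *)
From Stdlib Require Import Reals Lra List Permutation Classical ClassicalEpsilon.
Import ListNotations.
Open Scope R_scope.

Definition log2 (x : R) : R := ln x / ln 2.

(** Real power Z^a with the convention 0^a = 0 (for a > 0), Z >= 0. *)
Definition rpow (z a : R) : R :=
  if Rle_dec z 0 then 0 else Rpower z a.

Fixpoint sumn (n : nat) (f : nat -> R) : R :=
  match n with O => 0 | S k => sumn k f + f k end.

(** A binary-input channel with finite output alphabet {0,..,n-1}:
    W x y = P_{Y|X}(y|x), inputs x0 = false, x1 = true. *)
Definition is_channel (n : nat) (W : bool -> nat -> R) : Prop :=
  (forall x y, (y < n)%nat -> 0 <= W x y) /\
  (forall x, sumn n (W x) = 1).

Definition block_cols (n : nat) (blk : nat -> nat) (b : nat) : list nat :=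
  filter (fun y => Nat.eqb (blk y) b) (seq 0 n).

(** Symmetry in Gallager's sense: the columns can be partitioned into
    submatrices (blocks) such that in each submatrix every row is a
    permutation of every other row and every column is a permutation of
    every other column. *)
Definition gallager_symmetric (n : nat) (W : bool -> nat -> R) : Prop :=
  exists blk : nat -> nat,
    forall b : nat,
      Permutation (map (W false) (block_cols n blk b))
                  (map (W true) (block_cols n blk b)) /\
      (forall y y', In y (block_cols n blk b) -> In y' (block_cols n blk b) ->
         Permutation [W false y; W true y] [W false y'; W true y']).

Definition BIMS (n : nat) (W : bool -> nat -> R) : Prop :=
  is_channel n W /\ gallager_symmetric n W.

(** Capacity: I(X;Y) in bits under equiprobable inputs (0 log 0 = 0). *)
Definition mi_term (W : bool -> nat -> R) (x : bool) (y : nat) : R :=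
  if Req_EM_T (W x y) 0 then 0
  else / 2 * W x y * log2 (W x y / ((W false y + W true y) / 2)).

Definition capacity (n : nat) (W : bool -> nat -> R) : R :=
  sumn n (fun y => mi_term W false y + mi_term W true y).

Definition bhattacharyya (n : nat) (W : bool -> nat -> R) : R :=
  sumn n (fun y => sqrt (W false y * W true y)).

Definition xlog2x (p : R) : R := if Req_EM_T p 0 then 0 else p * log2 p.
Definition hb (p : R) : R := - xlog2x p - xlog2x (1 - p).

Definition Ex (rho Z : R) : R := - rho * log2 ((1 + rpow Z (/ rho)) / 2).

(** Extended reals (the supremum may be +infinity, e.g. Z = 0, R = 0). *)
Inductive Rbar : Type := Finite (r : R) | p_infty.

Definition Rbar_le (a b : Rbar) : Prop :=
  match a, b with
  | _, p_infty => True
  | p_infty, Finite _ => False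
  | Finite x, Finite y => x <= y
  end.

Definition img_ge1 (f : R -> R) (v : R) : Prop := exists rho, 1 <= rho /\ v = f rho.

Lemma img_ge1_ne (f : R -> R) : exists v, img_ge1 f v.
Proof. exists (f 1); exists 1; split; [lra | reflexivity]. Qed.

Definition sup_ge1 (f : R -> R) : Rbar :=
  match excluded_middle_informative (bound (img_ge1 f)) with
  | left H => Finite (proj1_sig (completeness (img_ge1 f) H (img_ge1_ne f)))
  | right _ => p_infty
  end.

(** E_ex(R) for a channel with Bhattacharyya parameter Z. *)
Definition Eex (Z Rt : R) : Rbar := sup_ge1 (fun rho => Ex rho Z - rho * Rt).

(** Expurgated exponents of the BEC and BSC of capacity C
    (eps is h^{-1}(1 - C)). *)
Definition Eex_bec (Rt C : R) : Rbar := Eex (1 - C) Rt.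
Definition Eex_bsc_eps (Rt eps : R) : Rbar := Eex (2 * sqrt (eps * (1 - eps))) Rt.

(* Main.v *)
Require Import Defs.
From Stdlib Require Import Reals Lra Lia ClassicalEpsilon.
From Coquelicot Require Import Coquelicot.
Require Import Defs.
Open Scope R_scope.
Definition gg u := 2 * exp (u/2) / (1 + exp u).
Definition HH u := ln (1 + exp u) - u * exp u / (1 + exp u).
Definition SS u := exp (u/2) - exp (- (u/2)).

Lemma exp_half u : exp u = exp (u/2) * exp (u/2).
Proof. rewrite <- exp_plus; f_equal; field. Qed.
Lemma exp_mhalf u : exp (- (u/2)) = / exp (u/2).
Proof. apply exp_Ropp. Qed.

Lemma FF_deriv a b u :
  is_derive (fun u => a * gg u - b * HH u) u
    ((b*u - a*SS u) * exp u / (1+exp u)^2).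
Proof.
  unfold gg, HH, SS.
  auto_derive.
  - assert (0 < exp u) by apply exp_pos. lra.
  - rewrite exp_mhalf. rewrite (exp_half u).
    assert (0 < exp (u/2)) by apply exp_pos.
    change (u * / 2) with (u/2). set (X := exp (u/2)) in *.
    field. split; try lra. nra.
Qed.

Lemma exp_pos2 u : 0 < exp u. Proof. apply exp_pos. Qed.

Lemma exp_le_mono x y : x <= y -> exp x <= exp y.
Proof. intros [H|H]. left; apply exp_increasing; auto. subst; lra. Qed.

Lemma mono_incr (f df : R -> R) a b : a <= b ->
  (forall x, a <= x <= b -> is_derive f x (df x)) ->
  (forall x, a <= x <= b -> 0 <= df x) -> f a <= f b.
Proof.
  intros [Hab|Hab] Hd Hp; [|subst; lra].
  destruct (MVT_cor2 f df a b Hab) as [c [Hc1 Hc2]].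
  - intros c Hc. apply is_derive_Reals. apply Hd; auto.
  - assert (0 <= df c) by (apply Hp; lra). nra.
Qed.

Lemma mono_decr (f df : R -> R) a b : a <= b ->
  (forall x, a <= x <= b -> is_derive f x (df x)) ->
  (forall x, a <= x <= b -> df x <= 0) -> f b <= f a.
Proof.
  intros [Hab|Hab] Hd Hp; [|subst; lra].
  destruct (MVT_cor2 f df a b Hab) as [c [Hc1 Hc2]].
  - intros c Hc. apply is_derive_Reals. apply Hd; auto.
  - assert (df c <= 0) by (apply Hp; lra). nra.
Qed.

Lemma SS_nonneg u : 0 <= u -> 0 <= SS u.
Proof. intros. unfold SS. assert (exp (-(u/2)) <= exp (u/2)) by (apply exp_le_mono; lra). lra. Qed.

Lemma SS_0 : SS 0 = 0.
Proof. unfold SS. replace (0/2) with 0 by field. rewrite Ropp_0. lra. Qed.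

Definition mm u := u * (exp (u/2) + exp (-(u/2))) / 2 - SS u.

Lemma mm_nonneg u : 0 <= u -> 0 <= mm u.
Proof.
  intros Hu.
  assert (mm 0 = 0) by (unfold mm; rewrite SS_0; lra).
  rewrite <- H.
  apply (mono_incr mm (fun u => u * SS u / 4)); auto.
  - intros x _. unfold mm, SS. auto_derive; auto.
    change (x * / 2) with (x/2). field.
  - intros x Hx. assert (0 <= SS x) by (apply SS_nonneg; lra).
    assert (0 <= x * SS x) by nra. lra.
Qed.

Lemma SS_ratio w v : 0 < w -> w <= v -> SS w * v <= SS v * w.
Proof.
  intros Hw Hwv.
  assert (SS w / w <= SS v / v).
  { apply (mono_incr (fun u => SS u / u) (fun u => mm u / (u*u))); auto.
    - intros x Hx. unfold mm, SS. auto_derive.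
      + lra.
      + change (x * / 2) with (x/2). field. lra.
    - intros x Hx. assert (0 <= mm x) by (apply mm_nonneg; lra).
      apply Rdiv_le_0_compat; nra. }
  apply (Rmult_le_compat_r (w*v)) in H; [|nra].
  replace (SS w / w * (w * v)) with (SS w * v) in H by (field; lra).
  replace (SS v / v * (w * v)) with (SS v * w) in H by (field; lra).
  lra.
Qed.

Definition KK a b u := b*u - a*SS u.
Definition FF a b u := a * gg u - b * HH u.

Lemma KL1 a b w u0 : 0 <= a -> 0 <= w <= u0 -> 0 <= KK a b u0 -> 0 <= KK a b w.
Proof.
  intros Ha [Hw Hwu] HK. unfold KK in *.
  destruct Hw as [Hw|Hw]; [|subst; rewrite SS_0; lra].
  pose proof (SS_ratio w u0 Hw Hwu).
  assert (0 <= (b*w - a*SS w) * u0).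
  { assert (0 <= (b*u0 - a*SS u0) * w) by nra. nra. }
  assert (0 < u0) by lra.
  nra.
Qed.

Lemma KL2 a b w u0 : 0 <= a -> 0 < u0 <= w -> KK a b u0 <= 0 -> KK a b w <= 0.
Proof.
  intros Ha [Hu Hwu] HK. unfold KK in *.
  pose proof (SS_ratio u0 w Hu Hwu).
  assert ((b*w - a*SS w) * u0 <= 0).
  { assert ((b*u0 - a*SS u0) * w <= 0) by nra. nra. }
  nra.
Qed.

Lemma FF_d a b u : is_derive (FF a b) u (KK a b u * exp u / (1+exp u)^2).
Proof. apply FF_deriv. Qed.

Lemma FI a b x y : 0 <= a -> 0 <= x <= y -> 0 <= KK a b y -> FF a b x <= FF a b y.
Proof.
  intros Ha Hxy HK.
  apply (mono_incr (FF a b) (fun u => KK a b u * exp u / (1+exp u)^2)); [lra| |].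
  - intros; apply FF_d.
  - intros u Hu. assert (0 <= KK a b u) by (apply (KL1 a b u y); auto; lra).
    pose proof (exp_pos u). apply Rdiv_le_0_compat; [nra|]. apply pow_lt; lra.
Qed.

Lemma FD a b x y : 0 <= a -> 0 < x <= y -> KK a b x <= 0 -> FF a b y <= FF a b x.
Proof.
  intros Ha Hxy HK.
  apply (mono_decr (FF a b) (fun u => KK a b u * exp u / (1+exp u)^2)); [lra| |].
  - intros; apply FF_d.
  - intros u Hu. assert (KK a b u <= 0) by (apply (KL2 a b u x); auto; lra).
    pose proof (exp_pos u). assert (0 < (1+exp u)^2) by (apply pow_lt; lra).
    unfold Rdiv. assert (0 <= exp u * / (1+exp u)^2).
    { apply Rmult_le_pos; [lra|]. left; apply Rinv_0_lt_compat; lra. }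
    nra.
Qed.

Lemma ln_le_xm1 x : 0 < x -> ln x <= x - 1.
Proof. intros. pose proof (exp_ineq1_le (ln x)). rewrite exp_ln in H0; lra. Qed.

Lemma HH_bound w : 0 < w -> HH w <= 5 / w.
Proof.
  intros Hw. unfold HH.
  set (E := exp w).
  assert (HE : 0 < E) by apply exp_pos.
  assert (HX : exp w = exp (w/2) * exp (w/2)) by apply exp_half.
  assert (HX1 : 1 + w/2 <= exp (w/2)) by apply exp_ineq1_le.
  assert (HE2 : w*w/4 + w <= E).
  { unfold E; rewrite HX. assert ((1+w/2)*(1+w/2) <= exp (w/2) * exp (w/2)) by (apply Rmult_le_compat; lra). nra. }
  assert (Hl : ln (1 + E) = w + ln (1 + /E)).
  { replace (1 + E) with (E * (1 + / E)) by (field; lra).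
    rewrite ln_mult; [| lra |]. unfold E; rewrite ln_exp; auto.
    assert (0 < /E) by (apply Rinv_0_lt_compat; lra). lra. }
  assert (Hl2 : ln (1 + /E) <= /E).
  { assert (0 < /E) by (apply Rinv_0_lt_compat; lra).
    pose proof (ln_le_xm1 (1 + /E)). lra. }
  assert (Hi : /E <= 1/w).
  { unfold Rdiv; rewrite Rmult_1_l. apply Rinv_le_contravar; nra. }
  assert (Hq : w - w * E / (1 + E) <= 4 / w).
  { replace (w - w * E / (1 + E)) with (w / (1+E)) by (field; lra).
    apply (Rmult_le_reg_r (w * (1+E))); [nra|].
    replace (w / (1 + E) * (w * (1 + E))) with (w*w) by (field; lra).
    replace (4 / w * (w * (1 + E))) with (4 * (1+E)) by (field; lra).
    nra. }
  replace (5 / w) with (1/w + 4/w) by (field; lra).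
  lra.
Qed.

Lemma gg_pos u : 0 < gg u.
Proof. unfold gg. pose proof (exp_pos (u/2)). pose proof (exp_pos u).
  apply Rdiv_lt_0_compat; lra. Qed.

Lemma FF_tail a b x : 0 <= a -> 0 <= b -> 0 < x -> KK a b x <= 0 -> 0 <= FF a b x.
Proof.
  intros Ha Hb Hx HK.
  destruct (Rle_or_lt 0 (FF a b x)) as [|Hn]; auto. exfalso.
  set (w := x + 5 * b / (- FF a b x) + 1).
  assert (Hq : 0 <= 5 * b / (- FF a b x)) by (apply Rdiv_le_0_compat; lra).
  assert (Hw : x <= w) by (unfold w; lra).
  pose proof (FD a b x w Ha (conj Hx Hw) HK).
  pose proof (HH_bound w ltac:(unfold w; lra)).
  pose proof (gg_pos w).
  unfold FF in H at 1.
  assert (b * HH w <= b * (5/w)) by (apply Rmult_le_compat_l; auto).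
  assert (5 * b < - FF a b x * w).
  { unfold w. assert (5 * b = - FF a b x * (5 * b / - FF a b x)) by (field; lra).
    nra. }
  assert (b * (5 / w) < - FF a b x).
  { apply (Rmult_lt_reg_r w); [lra|]. replace (b * (5/w) * w) with (5*b) by (field; lra). lra. }
  nra.
Qed.

Lemma gg_0 : gg 0 = 1.
Proof. unfold gg. replace (0/2) with 0 by field. rewrite exp_0. field. Qed.
Lemma HH_0 : HH 0 = ln 2.
Proof. unfold HH. rewrite exp_0. replace (1+1) with 2 by ring. field. Qed.

Lemma boundA u : 0 <= u -> HH u <= ln 2 * gg u.
Proof.
  intros Hu. pose proof ln_lt_2 as L2.
  assert (0 <= FF (ln 2) 1 u).
  { destruct (Rle_or_lt 0 (KK (ln 2) 1 u)) as [HK|HK].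
    - assert (FF (ln 2) 1 0 = 0) by (unfold FF; rewrite gg_0, HH_0; ring).
      rewrite <- H. apply FI; auto; lra.
    - destruct Hu as [Hu|Hu].
      + apply FF_tail; auto; lra.
      + subst. unfold KK in HK. rewrite SS_0 in HK. lra. }
  unfold FF in H. lra.
Qed.

Lemma boundB v u : 0 < v -> 0 <= u ->
  FF 1 (SS v / v) u <= FF 1 (SS v / v) v /\ 0 <= FF 1 (SS v / v) v.
Proof.
  intros Hv Hu.
  assert (HK : KK 1 (SS v / v) v = 0) by (unfold KK; field; lra).
  assert (Hs : 0 <= SS v / v) by (apply Rdiv_le_0_compat; [apply SS_nonneg|]; lra).
  split.
  - destruct (Rle_or_lt u v).
    + apply FI; lra.
    + apply FD; lra.
  - apply FF_tail; lra.
Qed.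

Lemma ln_div' x y : 0 < x -> 0 < y -> ln (x / y) = ln x - ln y.
Proof. intros. unfold Rdiv. rewrite ln_mult, ln_Rinv; try lra. apply Rinv_0_lt_compat; lra. Qed.

Lemma ab_exp a b : 0 < a -> 0 < b -> exp (ln (b/a)) = b/a.
Proof. intros. apply exp_ln. apply Rdiv_lt_0_compat; lra. Qed.

Lemma gg_ab a b : 0 < a -> 0 < b -> (a+b)/2 * gg (ln (b/a)) = sqrt (a*b).
Proof.
  intros Ha Hb. unfold gg.
  set (u := ln (b/a)).
  assert (HX : exp u = exp (u/2) * exp (u/2)) by apply exp_half.
  assert (Hu : exp u = b/a) by (apply ab_exp; auto).
  set (X := exp (u/2)) in *.
  assert (0 < X) by apply exp_pos.
  rewrite Hu.
  assert (Hs : a*b = (a*X)*(a*X)).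
  { replace ((a*X)*(a*X)) with (a*a*(X*X)) by ring. rewrite <- HX, Hu. field. lra. }
  rewrite Hs, sqrt_square by nra. field. split; [|lra].
  assert (0 < b/a) by (apply Rdiv_lt_0_compat; lra). lra.
Qed.

Lemma HH_ab a b : 0 < a -> 0 < b ->
  HH (ln (b/a)) = ln (a+b) - (a * ln a + b * ln b)/(a+b).
Proof.
  intros Ha Hb. unfold HH. rewrite ab_exp by auto.
  replace (1 + b/a) with ((a+b)/a) by (field; lra).
  rewrite !ln_div' by lra. field. split; lra.
Qed.

Lemma HH_ab_pos a b : 0 < a -> 0 < b -> 0 < HH (ln (b/a)).
Proof.
  intros Ha Hb. rewrite HH_ab by auto.
  assert (ln a < ln (a+b)) by (apply ln_increasing; lra).
  assert (ln b < ln (a+b)) by (apply ln_increasing; lra).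
  assert (ln (a+b) - (a * ln a + b * ln b)/(a+b) = (a*(ln (a+b) - ln a) + b * (ln (a+b) - ln b))/(a+b)) by (field; lra).
  rewrite H1. apply Rdiv_lt_0_compat; [|lra].
  assert (0 < a*(ln (a+b) - ln a)) by (apply Rmult_lt_0_compat; lra).
  assert (0 < b*(ln (a+b) - ln b)) by (apply Rmult_lt_0_compat; lra). lra.
Qed.

Lemma ln2_pos : 0 < ln 2.
Proof. pose proof ln_lt_2. lra. Qed.

Definition colC (a b : R) : R :=
  (if Req_EM_T a 0 then 0 else / 2 * a * log2 (a / ((a + b) / 2))) +
  (if Req_EM_T b 0 then 0 else / 2 * b * log2 (b / ((a + b) / 2))).

Lemma colC_ab a b : 0 < a -> 0 < b ->
  ln 2 * colC a b = (a+b)/2 * (ln 2 - HH (ln (b/a))).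
Proof.
  intros Ha Hb. pose proof ln2_pos. unfold colC.
  destruct (Req_EM_T a 0); [lra|]. destruct (Req_EM_T b 0); [lra|].
  rewrite HH_ab by auto. unfold log2.
  rewrite !ln_div' by lra. field. lra.
Qed.

Lemma colC_sym a b : colC a b = colC b a.
Proof. unfold colC. rewrite (Rplus_comm a b). ring. Qed.

Lemma col_decomp a b : 0 <= a -> 0 <= b ->
  exists gc hc, sqrt (a*b) = (a+b)/2 * gc /\ ln 2 * colC a b = (a+b)/2 * (ln 2 - hc) /\
   ((gc = 0 /\ hc = 0) \/ exists u, 0 <= u /\ gc = gg u /\ hc = HH u /\ 0 < hc).
Proof.
  intros Ha Hb. pose proof ln2_pos.
  destruct (Req_EM_T a 0) as [Ha0|Ha0].
  { subst. exists 0, 0. split; [rewrite Rmult_0_l, sqrt_0; ring|]. split; [|left; auto].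
    unfold colC. destruct (Req_EM_T 0 0); [|lra]. destruct (Req_EM_T b 0).
    - subst. lra.
    - unfold log2. replace (b / ((0+b)/2)) with 2 by (field; lra). field. lra. }
  destruct (Req_EM_T b 0) as [Hb0|Hb0].
  { subst. exists 0, 0. split; [rewrite Rmult_0_r, sqrt_0; ring|]. split; [|left; auto].
    unfold colC. destruct (Req_EM_T 0 0); [|lra]. destruct (Req_EM_T a 0); [lra|].
    unfold log2. replace (a / ((a+0)/2)) with 2 by (field; lra). field. lra. }
  assert (Ha' : 0 < a) by lra. assert (Hb' : 0 < b) by lra.
  destruct (Rle_or_lt a b).
  - exists (gg (ln (b/a))), (HH (ln (b/a))). split; [rewrite gg_ab; auto|].
    split; [apply colC_ab; auto|]. right. exists (ln (b/a)). repeat split; auto.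
    + rewrite <- ln_1. destruct (Req_dec a b).
      * subst. replace (b/b) with 1 by (field; lra). lra.
      * left. apply ln_increasing; [lra|]. apply (Rmult_lt_reg_r a); [lra|].
        replace (b/a*a) with b by (field; lra). lra.
    + apply HH_ab_pos; auto.
  - exists (gg (ln (a/b))), (HH (ln (a/b))). split.
    { rewrite Rmult_comm, Rplus_comm. rewrite gg_ab; auto. }
    split. { rewrite colC_sym, Rplus_comm. apply colC_ab; auto. }
    right. exists (ln (a/b)). repeat split; auto.
    + left. rewrite <- ln_1. apply ln_increasing; [lra|]. apply (Rmult_lt_reg_r b); [lra|].
        replace (a/b*b) with a by (field; lra). lra.
    + apply HH_ab_pos; auto.
Qed.

Lemma sumn_le n f g : (forall k, (k < n)%nat -> f k <= g k) -> sumn n f <= sumn n g.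
Proof.
  induction n; simpl; intros H; [lra|].
  assert (f n <= g n) by (apply H; lia).
  assert (sumn n f <= sumn n g) by (apply IHn; intros; apply H; lia). lra.
Qed.

Lemma sumn_ext n f g : (forall k, (k < n)%nat -> f k = g k) -> sumn n f = sumn n g.
Proof.
  induction n; simpl; intros H; [lra|].
  rewrite (H n) by lia. rewrite IHn; [reflexivity|]. intros; apply H; lia.
Qed.

Lemma sumn_lin n c1 c2 f g :
  sumn n (fun y => c1 * f y + c2 * g y) = c1 * sumn n f + c2 * sumn n g.
Proof. induction n; simpl; [ring|]. rewrite IHn. ring. Qed.

Lemma sumn_zero n : sumn n (fun _ => 0) = 0.
Proof. induction n; simpl; [lra|]. rewrite IHn; lra. Qed.

Lemma sumn_nonneg n f : (forall k, (k < n)%nat -> 0 <= f k) -> 0 <= sumn n f.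
Proof. intros. rewrite <- (sumn_zero n). apply sumn_le; auto. Qed.

Lemma sumn_zero_each n f : (forall k, (k < n)%nat -> 0 <= f k) -> sumn n f = 0 ->
  forall k, (k < n)%nat -> f k = 0.
Proof.
  induction n; simpl; intros H Hs k Hk; [lia|].
  assert (0 <= f n) by (apply H; lia).
  assert (0 <= sumn n f) by (apply sumn_nonneg; intros; apply H; lia).
  assert (f n = 0) by lra. assert (sumn n f = 0) by lra.
  destruct (Nat.eq_dec k n); [subst; auto|]. apply IHn; [intros; apply H; lia | assumption | lia].
Qed.

Definition tcol a b := ln 2 * ((a+b)/2) - ln 2 * colC a b.

Lemma col_low a b : 0 <= a -> 0 <= b -> tcol a b <= ln 2 * sqrt (a*b).
Proof.
  intros Ha Hb. pose proof ln2_pos. unfold tcol.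
  destruct (col_decomp a b Ha Hb) as [gc [hc [E1 [E2 [[-> ->]|[u [Hu [-> [-> Hp]]]]]]]]];
    rewrite E1, E2.
  - lra.
  - pose proof (boundA u Hu). assert (0 <= (a+b)/2) by lra.
    assert ((a+b)/2 * HH u <= (a+b)/2 * (ln 2 * gg u)) by (apply Rmult_le_compat_l; auto). nra.
Qed.

Lemma col_nonneg a b : 0 <= a -> 0 <= b -> 0 <= tcol a b.
Proof.
  intros Ha Hb. pose proof ln2_pos. unfold tcol.
  destruct (col_decomp a b Ha Hb) as [gc [hc [E1 [E2 [[-> ->]|[u [Hu [-> [-> Hp]]]]]]]]];
    rewrite E2.
  - lra.
  - assert (0 <= (a+b)/2) by lra. nra.
Qed.

Lemma col_zero a b : 0 <= a -> 0 <= b -> tcol a b = 0 -> sqrt (a*b) = 0.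
Proof.
  intros Ha Hb Ht. pose proof ln2_pos. unfold tcol in Ht.
  destruct (col_decomp a b Ha Hb) as [gc [hc [E1 [E2 [[-> ->]|[u [Hu [-> [-> Hp]]]]]]]]];
    rewrite E1.
  - lra.
  - rewrite E2 in Ht. assert ((a+b)/2 * HH u = 0) by lra.
    apply Rmult_integral in H0. destruct H0; [|lra]. rewrite H0. lra.
Qed.

Lemma col_up v a b : 0 < v -> 0 <= a -> 0 <= b ->
  sqrt (a*b) <= (a+b)/2 * (gg v - SS v / v * HH v) + SS v / v * tcol a b.
Proof.
  intros Hv Ha Hb. pose proof ln2_pos. unfold tcol.
  destruct (col_decomp a b Ha Hb) as [gc [hc [E1 [E2 [[-> ->]|[u [Hu [-> [-> Hp]]]]]]]]];
    rewrite E1, E2.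
  - destruct (boundB v v Hv) as [B1 B2]; [lra|]. unfold FF in B2.
    assert (0 <= (a+b)/2) by lra.
    assert (0 <= (a+b)/2 * (1 * gg v - SS v / v * HH v)) by (apply Rmult_le_pos; auto). nra.
  - destruct (boundB v u Hv Hu) as [B1 B2]. unfold FF in B1, B2.
    assert (0 <= (a+b)/2) by lra.
    assert ((a+b)/2 * (1 * gg u - SS v / v * HH u) <= (a+b)/2 * (1 * gg v - SS v / v * HH v))
      by (apply Rmult_le_compat_l; auto). nra.
Qed.

Lemma col_amgm a b : 0 <= a -> 0 <= b -> sqrt (a*b) <= (a+b)/2.
Proof.
  intros. rewrite <- (sqrt_square ((a+b)/2)) by lra. apply sqrt_le_1; [nra|nra|]. pose proof (Rle_0_sqr (a-b)). unfold Rsqr in *. nra.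
Qed.

Lemma rpow_nonneg z a : 0 <= rpow z a.
Proof. unfold rpow. destruct (Rle_dec z 0); [lra|]. unfold Rpower. left; apply exp_pos. Qed.

Lemma rpow_mono z1 z2 a : 0 < a -> z1 <= z2 -> rpow z1 a <= rpow z2 a.
Proof.
  intros Ha Hz. unfold rpow.
  destruct (Rle_dec z1 0); destruct (Rle_dec z2 0); try lra.
  - unfold Rpower; left; apply exp_pos.
  - apply Rle_Rpower_l; lra.
Qed.

Lemma Ex_mono rho z1 z2 : 1 <= rho -> z1 <= z2 -> Ex rho z2 <= Ex rho z1.
Proof.
  intros Hr Hz. unfold Ex, log2. pose proof ln2_pos.
  assert (0 < / rho) by (apply Rinv_0_lt_compat; lra).
  pose proof (rpow_mono z1 z2 (/rho) H0 Hz).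
  pose proof (rpow_nonneg z1 (/rho)).
  assert (ln ((1 + rpow z1 (/rho))/2) <= ln ((1 + rpow z2 (/rho))/2)).
  { destruct (Req_dec (rpow z1 (/rho)) (rpow z2 (/rho))) as [E|E]; [rewrite E; lra|].
    left. apply ln_increasing; lra. }
  assert (ln ((1 + rpow z1 (/rho))/2) / ln 2 <= ln ((1 + rpow z2 (/rho))/2) / ln 2).
  { apply Rmult_le_compat_r; auto. left; apply Rinv_0_lt_compat; auto. }
  nra.
Qed.

Lemma sup_mono f g : (forall rho, 1 <= rho -> f rho <= g rho) ->
  Rbar_le (sup_ge1 f) (sup_ge1 g).
Proof.
  intros Hfg. unfold sup_ge1.
  destruct (excluded_middle_informative (bound (img_ge1 g))) as [Bg|Bg]; [|
    destruct (excluded_middle_informative (bound (img_ge1 f))); exact I].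
  destruct (completeness (img_ge1 g) Bg (img_ge1_ne g)) as [lg [Ulg Llg]]; simpl.
  assert (Uf : is_upper_bound (img_ge1 f) lg).
  { intros x [rho [Hr ->]]. apply Rle_trans with (g rho); auto. apply Ulg. exists rho; auto. }
  destruct (excluded_middle_informative (bound (img_ge1 f))) as [Bf|Bf].
  - destruct (completeness (img_ge1 f) Bf (img_ge1_ne f)) as [lf [Ulf Llf]]; simpl.
    apply Llf; auto.
  - exfalso; apply Bf. exists lg; auto.
Qed.

Lemma Eex_mono z1 z2 Rt : z1 <= z2 -> Rbar_le (Eex z2 Rt) (Eex z1 Rt).
Proof.
  intros. unfold Eex. apply sup_mono. intros rho Hr.
  pose proof (Ex_mono rho z1 z2 Hr H). lra.
Qed.

Lemma sumn_scal n c f : sumn n (fun y => c * f y) = c * sumn n f.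
Proof. induction n; simpl; [ring|]. rewrite IHn. ring. Qed.

Theorem mainTheorem9 :
  forall (n : nat) (W : bool -> nat -> R),
    BIMS n W ->
    forall (Rt : R), 0 <= Rt ->
    forall (eps : R), 0 <= eps <= / 2 -> hb eps = 1 - capacity n W ->
      Rbar_le (Eex_bsc_eps Rt eps) (Eex (bhattacharyya n W) Rt) /\
      Rbar_le (Eex (bhattacharyya n W) Rt) (Eex_bec Rt (capacity n W)).
Proof.
  intros n W [[Hnn Hsum] _] Rt HRt eps Heps Hhb.
  pose proof ln2_pos as L2.
  assert (HC : capacity n W = sumn n (fun y => colC (W false y) (W true y))).
  { unfold capacity. apply sumn_ext. intros; reflexivity. }
  assert (Hw : sumn n (fun y => (W false y + W true y)/2) = 1).
  { rewrite (sumn_ext n _ (fun y => /2 * W false y + /2 * W true y)).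
    - rewrite sumn_lin, (Hsum false), (Hsum true). field.
    - intros; field. }
  assert (HT : sumn n (fun y => tcol (W false y) (W true y)) = ln 2 * (1 - capacity n W)).
  { rewrite (sumn_ext n _ (fun y => ln 2 * ((W false y + W true y)/2) + (- ln 2) * colC (W false y) (W true y))).
    - rewrite sumn_lin, Hw, <- HC. ring.
    - intros; unfold tcol; ring. }
  set (Z := bhattacharyya n W).
  assert (HZ : Z = sumn n (fun y => sqrt (W false y * W true y))) by reflexivity.
  assert (Low : 1 - capacity n W <= Z).
  { assert (ln 2 * (1 - capacity n W) <= ln 2 * Z).
    { rewrite <- HT, HZ, <- sumn_scal. apply sumn_le. intros k Hk.
      apply col_low; apply Hnn; auto. }
    apply (Rmult_le_reg_l (ln 2)); auto. }
  assert (Up : Z <= 2 * sqrt (eps * (1 - eps))).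
  { destruct Heps as [[He0|He0] He1].
    - destruct He1 as [He1|He1].
      +
        set (v := ln ((1 - eps)/eps)).
        assert (Hv : 0 < v).
        { unfold v. rewrite <- ln_1. apply ln_increasing; [lra|].
          apply (Rmult_lt_reg_r eps); [lra|]. replace ((1-eps)/eps*eps) with (1-eps) by (field; lra). lra. }
        assert (Hg : gg v = 2 * sqrt (eps * (1 - eps))).
        { pose proof (gg_ab eps (1-eps) He0 ltac:(lra)). fold v in H.
          replace ((eps + (1 - eps)) / 2) with (/2) in H by field. rewrite <- H. field. }
        assert (Hh : HH v = ln 2 * hb eps).
        { unfold v. rewrite HH_ab by lra. replace (eps + (1 - eps)) with 1 by ring.
          rewrite ln_1. unfold hb, xlog2x, log2.
          destruct (Req_EM_T eps 0); [lra|]. destruct (Req_EM_T (1-eps) 0); [lra|].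
          field. lra. }
        set (s := SS v / v).
        assert (Z <= sumn n (fun y => (gg v - s * HH v) * ((W false y + W true y)/2) + s * tcol (W false y) (W true y))).
        { rewrite HZ. apply sumn_le. intros k Hk.
          pose proof (col_up v (W false k) (W true k) Hv (Hnn _ _ Hk) (Hnn _ _ Hk)). fold s in H. lra. }
        rewrite sumn_lin, Hw, HT, Hh, Hhb in H. rewrite <- Hg. lra.
      +
        subst eps. replace (/2 * (1 - /2)) with (/2 * /2) by field.
        rewrite sqrt_square by lra. rewrite HZ.
        replace (2 * /2) with 1 by field. rewrite <- Hw. apply sumn_le. intros k Hk.
        apply col_amgm; apply Hnn; auto.
    -
      subst eps. rewrite Rmult_0_l, sqrt_0, Rmult_0_r.
      assert (Hc1 : capacity n W = 1).
      { unfold hb, xlog2x in Hhb. destruct (Req_EM_T 0 0); [|lra].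
        destruct (Req_EM_T (1-0) 0); [lra|]. replace (1-0) with 1 in Hhb by ring.
        unfold log2 in Hhb. rewrite ln_1 in Hhb. lra. }
      rewrite Hc1 in HT. replace (ln 2 * (1 - 1)) with 0 in HT by ring.
      pose proof (sumn_zero_each n _ (fun k Hk => col_nonneg _ _ (Hnn _ _ Hk) (Hnn _ _ Hk)) HT) as Hz.
      rewrite HZ. rewrite (sumn_ext n _ (fun _ => 0)).
      + rewrite sumn_zero; lra.
      + intros k Hk. apply col_zero; try apply Hnn; auto. }
  unfold Eex_bsc_eps, Eex_bec. split; apply Eex_mono; auto.
Qed.
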